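(* Let $n\ge1$, $X=\{1,\dots,n\}$, $\mathcal{A}$ the algebra of all functions $X\to\mathbb{R}$ with pointwise operations, $\sigma:X\to X$ a bijection and $\tilde{\sigma}(f)=f\circ\sigma^{-1}$. In the skew polynomial ring $\mathcal{A}[x,\tilde{\sigma},0]$, the centralizer of $\mathcal{A}$ is $$C(\mathcal{A})=\Big\{\sum_{k=0}^m f_kx^k : m\ge0,\ f_k\in\mathcal{A},\ f_k=0 \text{ on } Sep^k(X) \text{ for all } k\Big\}.$$
   Context: For a ring $R$ with endomorphism $\sigma$ and $\sigma$-derivation $\Delta$ (additive map with $\Delta(ab)=\sigma(a)\Delta(b)+\Delta(a)b$), the Ore extension $R[x,\sigma,\Delta]$ is the ring generated by $R$ and an element $x$ such that $1,x,x^2,\dots$ is a basis of it as a left $R$-module and $xr=\sigma(r)x+\Delta(r)$ for all $r\in R$; $R[x,\sigma,0]$ is the case $\Delta=0$. The centralizer of a subset $T$ is the set of elements commuting with every element of $T$. For an integer $k$, $Sep^k(X)=\{p\in X: \sigma^k(p)\neq p\}$ (so $Sep^0(X)=\emptyset$). *)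

(* Defs.v *)
From HB Require Import structures.
From mathcomp Require Import all_boot all_order all_algebra all_fingroup.
Set Implicit Arguments. Unset Strict Implicit. Unset Printing Implicit Defensive.
Import Order.TTheory GRing.Theory Num.Theory.
Local Open Scope ring_scope.

Definition fnalg (R : realFieldType) (n : nat) := {ffun 'I_n -> R}.

Definition sigt (R : realFieldType) (n : nat) (s : {perm 'I_n})
  (f : {ffun 'I_n -> R}) : {ffun 'I_n -> R} :=
  [ffun x => f ((s^-1)%g x)].

(* Elements of the skew polynomial ring A[x, sigma~, 0] are represented by
   their (left) coefficient sequences p = [:: f_0; f_1; ...; f_m] standing for
   \sum_k f_k x^k; two sequences represent the same element iff they have the
   same coefficients (trailing zeros are irrelevant), see [skew_eq]. *)

(* Product in A[x, sigma~, 0]: (f x^i)(g x^j) = f sigma~^i(g) x^(i+j). *)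
Definition skew_mul (R : realFieldType) (n : nat) (s : {perm 'I_n})
  (p q : seq {ffun 'I_n -> R}) : seq {ffun 'I_n -> R} :=
  mkseq (fun k => \sum_(i < k.+1) p`_i * iter i (sigt s) q`_(k - i))
        (size p + size q).-1.

Definition skew_eq (R : realFieldType) (n : nat) (p q : seq {ffun 'I_n -> R}) : Prop :=
  forall k : nat, p`_k = q`_k.

Definition in_centralizer_A (R : realFieldType) (n : nat) (s : {perm 'I_n})
  (p : seq {ffun 'I_n -> R}) : Prop :=
  forall a : {ffun 'I_n -> R}, skew_eq (skew_mul s p [:: a]) (skew_mul s [:: a] p).

Definition Sep (n : nat) (s : {perm 'I_n}) (k : nat) : {set 'I_n} :=
  [set x | (s ^+ k)%g x != x].

(* Main.v *)
Require Import Defs.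
From HB Require Import structures.
From mathcomp Require Import all_boot all_order all_algebra all_fingroup.
Import Order.TTheory GRing.Theory Num.Theory.
Local Open Scope ring_scope.

Lemma mulfE (R : realFieldType) n (f g : {ffun 'I_n -> R}) x : (f * g) x = f x * g x.
Proof. by rewrite ffunE. Qed.
Lemma zerofE (R : realFieldType) n x : (0 : {ffun 'I_n -> R}) x = 0.
Proof. by rewrite ffunE. Qed.

Lemma iter_sigt (R : realFieldType) n (s : {perm 'I_n}) k (a : {ffun 'I_n -> R}) :
  iter k (sigt s) a = [ffun x => a (((s^-1) ^+ k)%g x)].
Proof.
elim: k => [|k IH] /=; apply/ffunP => x; rewrite !ffunE ?expg0 ?perm1 //.
by rewrite IH ffunE expgS permM.
Qed.

Lemma coef_r (R : realFieldType) n (s : {perm 'I_n}) (p : seq {ffun 'I_n -> R}) a k :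
  (skew_mul s p [:: a])`_k = p`_k * iter k (sigt s) a.
Proof.
rewrite /skew_mul addn1 /=.
case: (ltnP k (size p)) => hk; last by rewrite !nth_default ?mul0r ?size_mkseq.
rewrite nth_mkseq // big_ord_recr /= subnn /= big1 ?add0r // => i _.
have -> : (k - i = (k - i).-1.+1)%N by rewrite prednK // subn_gt0.
by rewrite /= nth_nil iter_sigt; apply/ffunP => x; rewrite !ffunE mulr0.
Qed.

Lemma coef_l (R : realFieldType) n (s : {perm 'I_n}) (p : seq {ffun 'I_n -> R}) a k :
  (skew_mul s [:: a] p)`_k = a * p`_k.
Proof.
rewrite /skew_mul add1n /=.
case: (ltnP k (size p)) => hk; last by rewrite !nth_default ?mulr0 ?size_mkseq.
rewrite nth_mkseq // big_ord_recl /= subn0 big1 ?addr0 // => i _.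
by rewrite /= nth_nil mul0r.
Qed.

Theorem theorem3 (R : realFieldType) (n : nat) (hn : (0 < n)%N)
  (s : {perm 'I_n}) (p : seq {ffun 'I_n -> R}) :
  in_centralizer_A s p <->
  (forall (k : nat) (x : 'I_n), x \in Sep s k -> p`_k x = 0).
Proof.
have key : forall k (x : 'I_n), ((s^-1) ^+ k)%g x == x = ((s ^+ k)%g x == x).
  move=> k x; rewrite expgVn; apply/eqP/eqP => h.
    by rewrite -{1}h -permM ?mulgV ?mulVg perm1.
  by rewrite -{1}h -permM ?mulgV ?mulVg perm1.
split.
- move=> H k x; rewrite inE => hx.
  have := congr1 (fun f : {ffun 'I_n -> R} => f x) (H [ffun y => (y == x)%:R] k).
  rewrite coef_r coef_l iter_sigt /= !mulfE !ffunE eqxx key (negbTE hx) mulr0 mul1r.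
  by move=> ->.
- move=> H a k; rewrite coef_r coef_l iter_sigt; apply/ffunP => x.
  rewrite !mulfE ffunE.
  case hx: (x \in Sep s k); first by rewrite H // mulr0 mul0r.
  move: hx; rewrite inE -key => /negbFE /eqP ->.
  by rewrite mulrC.
Qed.
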